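(* Let $\mathcal{H}$ be a supersolvable hyperplane arrangement of rank $n\geq 2$. Then the graph of regions $G(\mathcal{H})$ has a Hamiltonian cycle of even length.
   Context: A hyperplane arrangement in $\mathbb{R}^d$ is a finite set $\mathcal{H}$ of linear hyperplanes (hyperplanes through the origin). Its rank is the dimension of the span of the normal vectors of its hyperplanes. The regions of $\mathcal{H}$ are the connected components of $\mathbb{R}^d\setminus\bigcup_{H\in\mathcal{H}}H$. The graph of regions $G(\mathcal{H})$ has the regions as vertices, two regions being adjacent if and only if they are separated by exactly one hyperplane of $\mathcal{H}$. Supersolvability is defined recursively on the rank: an arrangement $\mathcal{H}$ of rank $n$ is supersolvable if either $n\leq 2$, or $n\geq 3$ and $\mathcal{H}$ is the disjoint union of two nonempty arrangements $\mathcal{H}_0$ and $\mathcal{H}_1$, where $\mathcal{H}_0$ is a supersolvable arrangement of rank $n-1$, and for any two distinct hyperplanes $H',H''\in\mathcal{H}_1$ there exists $H\in\mathcal{H}_0$ with $H'\cap H''\subseteq H$. *)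

(* Defs.v *)
From HB Require Import structures.
From mathcomp Require Import all_boot all_order all_algebra.
From mathcomp Require Import all_classical all_reals all_analysis.
Set Implicit Arguments. Unset Strict Implicit. Unset Printing Implicit Defensive.
Import Order.TTheory GRing.Theory Num.Theory.
Import numFieldNormedType.Exports.
Local Open Scope classical_set_scope.
Local Open Scope ring_scope.

(* Points of R^d are row vectors 'rV[R]_d (with their canonical
   normed-space topology from MathComp-Analysis). *)

Definition dotv (R : realType) (d : nat) (a x : 'rV[R]_d) : R :=
  \sum_(i < d) a 0 i * x 0 i.

Definition hyp (R : realType) (d : nat) (a : 'rV[R]_d) : set 'rV[R]_d :=
  [set x | dotv a x = 0].

(* A hyperplane arrangement: a finite list of normal vectors, all nonzero,
   defining pairwise distinct hyperplanes (so it is a finite *set* of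
   linear hyperplanes). *)
Definition arrangement (R : realType) (d : nat) (A : seq 'rV[R]_d) : Prop :=
  (forall a, a \in A -> a != 0) /\
  (forall i j, (i < size A)%N -> (j < size A)%N ->
     hyp (nth 0 A i) = hyp (nth 0 A j) -> i = j).

Definition arr_rank (R : realType) (d : nat) (A : seq 'rV[R]_d) : nat :=
  \rank (\matrix_(i < size A) nth 0 A i).

(* Supersolvability, defined recursively on the rank as in the paper.
   "H is the disjoint union of H0 and H1" is expressed by A being a
   permutation of A0 ++ A1 (A has no repeated hyperplanes). *)
Inductive supersolvable (R : realType) (d : nat) : seq 'rV[R]_d -> Prop :=
| SS_low A : (arr_rank A <= 2)%N -> supersolvable A
| SS_step A A0 A1 :
    (3 <= arr_rank A)%N ->
    perm_eq A (A0 ++ A1) ->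
    A0 != [::] -> A1 != [::] ->
    supersolvable A0 ->
    arr_rank A0 = (arr_rank A).-1 ->
    (forall i j, (i < size A1)%N -> (j < size A1)%N -> i <> j ->
       exists2 a, a \in A0 &
         hyp (nth 0 A1 i) `&` hyp (nth 0 A1 j) `<=` hyp a) ->
    supersolvable A.

Definition arr_complement (R : realType) (d : nat) (A : seq 'rV[R]_d)
  : set 'rV[R]_d :=
  ~` (\bigcup_(a in [set a | a \in A]) hyp a).

Definition region (R : realType) (d : nat) (A : seq 'rV[R]_d)
  (C : set 'rV[R]_d) : Prop :=
  exists2 x, arr_complement A x & C = connected_component (arr_complement A) x.

Definition separates (R : realType) (d : nat) (a : 'rV[R]_d)
  (C1 C2 : set 'rV[R]_d) : Prop :=
  ((forall x, C1 x -> 0 < dotv a x) /\ (forall y, C2 y -> dotv a y < 0)) \/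
  ((forall x, C1 x -> dotv a x < 0) /\ (forall y, C2 y -> 0 < dotv a y)).

Definition adjacent (R : realType) (d : nat) (A : seq 'rV[R]_d)
  (C1 C2 : set 'rV[R]_d) : Prop :=
  count (fun a => `[< separates a C1 C2 >]) A = 1%N.

Definition hamiltonian_cycle (R : realType) (d : nat) (A : seq 'rV[R]_d)
  (s : seq (set 'rV[R]_d)) : Prop :=
  [/\ (3 <= size s)%N,
      (forall i, (i < size s)%N -> region A (nth set0 s i)),
      (forall C, region A C -> exists2 i, (i < size s)%N & nth set0 s i = C),
      (forall i j, (i < size s)%N -> (j < size s)%N ->
         nth set0 s i = nth set0 s j -> i = j) &
      (forall i, (i < size s)%N ->
         adjacent A (nth set0 s i) (nth set0 s (i.+1 %% size s)))].

(* Main.v *)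
Require Import Defs.
From HB Require Import structures.
From mathcomp Require Import all_boot all_order all_algebra.
From mathcomp Require Import all_classical all_reals all_analysis.
From mathcomp Require Import ring lra zify.
Set Implicit Arguments. Unset Strict Implicit. Unset Printing Implicit Defensive.
Import Order.TTheory GRing.Theory Num.Theory.
Import numFieldNormedType.Exports.
Local Open Scope classical_set_scope.
Local Open Scope ring_scope.


Lemma dotvD (R : realType) (d : nat) (a x y : 'rV[R]_d) :
  dotv a (x + y) = dotv a x + dotv a y.
Proof. by rewrite /dotv -big_split; apply: eq_bigr => i _; rewrite mxE mulrDr. Qed.

Lemma dotvZ (R : realType) (d : nat) (a x : 'rV[R]_d) (k : R) :
  dotv a (k *: x) = k * dotv a x.
Proof. by rewrite /dotv mulr_sumr; apply: eq_bigr => i _; rewrite mxE mulrCA. Qed.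

Lemma dotvN (R : realType) (d : nat) (a x : 'rV[R]_d) :
  dotv a (- x) = - dotv a x.
Proof. by rewrite -scaleN1r dotvZ mulN1r. Qed.

Lemma dotvB (R : realType) (d : nat) (a x y : 'rV[R]_d) :
  dotv a (x - y) = dotv a x - dotv a y.
Proof. by rewrite dotvD dotvN. Qed.

Lemma dotvC (R : realType) (d : nat) (a x : 'rV[R]_d) : dotv a x = dotv x a.
Proof. by rewrite /dotv; apply: eq_bigr => i _; rewrite mulrC. Qed.

Lemma dotv_self0 (R : realType) (d : nat) (a : 'rV[R]_d) :
  dotv a a = 0 -> a = 0.
Proof.
move=> h; apply/rowP => i; rewrite mxE.
have /eqP := h; rewrite /dotv psumr_eq0; last by move=> j _; by rewrite -expr2 sqr_ge0.
move/allP/(_ i (mem_index_enum _)) => /=; rewrite mulf_eq0 orbb => /eqP ->.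
by [].
Qed.

Lemma dotv_self_gt0 (R : realType) (d : nat) (a : 'rV[R]_d) :
  a != 0 -> 0 < dotv a a.
Proof.
move=> a0; rewrite lt_neqAle eq_sym; apply/andP; split.
  by apply/eqP => /dotv_self0 h; move: a0; rewrite h eqxx.
by rewrite /dotv sumr_ge0 // => i _; by rewrite -expr2 sqr_ge0.
Qed.

Lemma dotv_mul (R : realType) (d : nat) (a : 'rV[R]_d) (u : 'M[R]_1) x :
  dotv (u *m a) x = u 0 0 * dotv a x.
Proof.
rewrite /dotv mulr_sumr; apply: eq_bigr => i _.
by rewrite !mxE big_ord1 mulrA.
Qed.

Lemma dotvDl (R : realType) (d : nat) (a b x : 'rV[R]_d) :
  dotv (a + b) x = dotv a x + dotv b x.
Proof. by rewrite dotvC dotvD -!(dotvC x). Qed.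

Lemma hyp_sub_eq (R : realType) (d : nat) (a0 a1 : 'rV[R]_d) :
  a0 != 0 -> a1 != 0 -> hyp a1 `<=` hyp a0 -> hyp a0 = hyp a1.
Proof.
move=> n0 n1 sub.
have g1 := dotv_self_gt0 n1.
set lam := dotv a0 a1 / dotv a1 a1.
have key y : dotv a0 y = lam * dotv a1 y.
  have : hyp a1 (y - (dotv a1 y / dotv a1 a1) *: a1).
    rewrite /hyp /= dotvB dotvZ mulfVK ?subrr //; exact: lt0r_neq0.
  move/sub; rewrite /hyp /= dotvB dotvZ => /eqP; rewrite subr_eq0 => /eqP ->.
  by rewrite /lam mulrAC (dotvC a0) [RHS]mulrC mulrA.
have lam0 : lam != 0.
  apply/eqP => l0; have : a0 = 0 by apply: dotv_self0; rewrite key l0 mul0r.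
  by move=> h; move: n0; rewrite h eqxx.
apply/seteqP; split => y; rewrite /hyp /= key.
  by move/eqP; rewrite mulf_eq0 (negbTE lam0) => /eqP.
by move->; rewrite mulr0.
Qed.


Definition compl (R : realType) (d : nat) (L : seq 'rV[R]_d) (x : 'rV[R]_d) :=
  all (fun a => dotv a x != 0) L.
Definition sgv (R : realType) (d : nat) (L : seq 'rV[R]_d) (x y : 'rV[R]_d) :=
  all (fun a => (0 < dotv a x) == (0 < dotv a y)) L.
Definition cell (R : realType) (d : nat) (L : seq 'rV[R]_d) (x : 'rV[R]_d) :
  set 'rV[R]_d := [set y | compl L y /\ sgv L x y].

Lemma complE (R : realType) (d : nat) (A : seq 'rV[R]_d) :
  arr_complement A = [set y | compl A y].
Proof.
apply/seteqP; split => y /=.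
  move=> h; apply/allP => a aA; apply/eqP => e; apply: h.
  by exists a.
by move=> /allP h [a /= aA]; rewrite /hyp /= => e; move: (h a aA); rewrite e eqxx.
Qed.

Lemma dotv_continuous (R : realType) (d : nat) (a : 'rV[R]_d) :
  continuous (dotv a).
Proof.
rewrite /dotv.
suff H : forall s : seq 'I_d,
    continuous (fun x : 'rV[R]_d => \sum_(i <- s) a 0 i * x 0 i) by exact: H.
elim => [|i s IH].
  have -> : (fun x : 'rV[R]_d => \sum_(i <- [::]) a 0 i * x 0 i) = (fun=> 0).
    by apply/funext => x; rewrite big_nil.
  exact: cst_continuous.
have -> : (fun x : 'rV[R]_d => \sum_(j <- i :: s) a 0 j * x 0 j) =
    (fun x => a 0 i * x 0 i) + (fun x => \sum_(j <- s) a 0 j * x 0 j).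
  by apply/funext => x; rewrite big_cons.
move=> x; apply: (cvgD (F := nbhs x)); last exact: IH.
have hc := @coord_continuous R 1 d 0 i x.
apply: (cvgM (F := nbhs x)) => //; exact: cvg_cst.
Qed.

Lemma comb_pos (R : realType) (p q t : R) :
  0 < p -> 0 < q -> 0 <= t <= 1 -> 0 < p + t * (q - p).
Proof. move=> hp hq /andP[t0 t1]; nra. Qed.

Lemma sign_comb (R : realType) (p q t : R) (b : bool) :
  p != 0 -> q != 0 -> (0 < p) = b -> (0 < q) = b -> 0 <= t <= 1 ->
  (0 < p + t * (q - p)) = b /\ p + t * (q - p) != 0.
Proof.
move=> np nq ep eq ht; case: (boolP (0 < p)) => hp.
  have hq : 0 < q by rewrite eq -ep.
  have h := comb_pos hp hq ht; rewrite h -ep hp; split => //; exact: lt0r_neq0.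
have hp' : p < 0 by rewrite lt_neqAle np /= leNgt.
have hq' : q < 0.
  by rewrite lt_neqAle nq /= leNgt eq -ep (negbTE hp).
have h := comb_pos (p := - p) (q := - q) ltac:(by rewrite oppr_gt0)
  ltac:(by rewrite oppr_gt0) ht.
have e : - p + t * (- q - - p) = - (p + t * (q - p)) by ring.
rewrite e oppr_gt0 in h.
rewrite -ep (negbTE hp) (ltNge 0) (ltW h); split => //; exact: ltr0_neq0.
Qed.

Lemma cell_convex (R : realType) (d : nat) (L : seq 'rV[R]_d) x y z (t : R) :
  cell L x y -> cell L x z -> 0 <= t <= 1 -> cell L x (y + t *: (z - y)).
Proof.
move=> [/allP cy /allP sy] [/allP cz /allP sz] ht.
have key a : a \in L -> 
  (0 < dotv a (y + t *: (z - y))) = (0 < dotv a x) /\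
  dotv a (y + t *: (z - y)) != 0.
  move=> aL; rewrite dotvD dotvZ dotvB.
  apply: sign_comb => //; [exact: cy|exact: cz|by rewrite (eqP (sy a aL))|by rewrite (eqP (sz a aL))].
split; apply/allP => a aL; have [h1 h2] := key a aL => //.
by rewrite h1.
Qed.

Lemma cell_self (R : realType) (d : nat) (L : seq 'rV[R]_d) x :
  compl L x -> cell L x x.
Proof. by move=> cx; split => //; apply/allP => a _. Qed.

Lemma cell_connected (R : realType) (d : nat) (L : seq 'rV[R]_d) x :
  compl L x -> connected (cell L x).
Proof.
move=> cx.
have E : cell L x = \bigcup_(z in cell L x)
    ((fun t : R => x + t *: (z - x)) @` `[0, 1]).
  apply/seteqP; split => [z cz|y [z cz [t ht <-]]].
    exists z => //; exists 1; last by rewrite scale1r addrC subrK.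
    by rewrite /= in_itv /= ler01 lexx.
  apply: cell_convex; [exact: cell_self | exact: cz |].
  by move: ht; rewrite /= in_itv.
rewrite E; apply: bigcup_connected.
  exists x => z cz; exists 0; last by rewrite scale0r addr0.
  by rewrite /= in_itv /= ler01 lexx.
move=> z cz; apply: connected_continuous_connected; first exact: segment_connected.
apply: continuous_subspaceT => t.
apply: (cvgD (F := nbhs t)); first exact: cvg_cst.
apply: (cvgZ (F := nbhs t)); [exact: cvg_id | exact: cvg_cst].
Qed.

Lemma open_allL (R : realType) (d : nat) (L : seq 'rV[R]_d)
  (P : 'rV[R]_d -> set 'rV[R]_d) :
  (forall a, open (P a)) -> open [set y | forall a, a \in L -> P a y].
Proof.
move=> oP; elim: L => [|a L IH].
  have -> : [set y : 'rV[R]_d | forall a, a \in [::] -> P a y] = setT.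
    by apply/seteqP; split => // y _ a.
  exact: openT.
have -> : [set y | forall b, b \in a :: L -> P b y] =
    P a `&` [set y | forall b, b \in L -> P b y].
  apply/seteqP; split => y /=.
    by move=> h; split; [apply: h; rewrite inE eqxx | move=> b bL; apply: h; rewrite inE bL orbT].
  by move=> [h1 h2] b; rewrite inE => /orP[/eqP ->//|]; exact: h2.
exact: openI.
Qed.

Lemma closed_allL (R : realType) (d : nat) (L : seq 'rV[R]_d)
  (P : 'rV[R]_d -> set 'rV[R]_d) :
  (forall a, closed (P a)) -> closed [set y | forall a, a \in L -> P a y].
Proof.
move=> oP; elim: L => [|a L IH].
  have -> : [set y : 'rV[R]_d | forall a, a \in [::] -> P a y] = setT.
    by apply/seteqP; split => // y _ a.
  exact: closedT.
have -> : [set y | forall b, b \in a :: L -> P b y] =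
    P a `&` [set y | forall b, b \in L -> P b y].
  apply/seteqP; split => y /=.
    by move=> h; split; [apply: h; rewrite inE eqxx | move=> b bL; apply: h; rewrite inE bL orbT].
  by move=> [h1 h2] b; rewrite inE => /orP[/eqP ->//|]; exact: h2.
exact: closedI.
Qed.

Lemma comp_cell (R : realType) (d : nat) (A : seq 'rV[R]_d) x :
  compl A x -> connected_component (arr_complement A) x = cell A x.
Proof.
move=> cx; rewrite complE.
set K := connected_component _ x.
apply/seteqP; split; last first.
  apply: connected_component_max; [exact: cell_self | by move=> y [] | exact: cell_connected].
have Kc : connected K by exact: component_connected.
have KA : K `<=` [set y | compl A y] by exact: connected_component_sub.
set O := [set y | forall a, a \in A ->
   (if 0 < dotv a x then [set y | 0 < dotv a y] else [set y | dotv a y < 0]) y].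
set F := [set y | forall a, a \in A ->
   (if 0 < dotv a x then [set y | 0 <= dotv a y] else [set y | dotv a y <= 0]) y].
have oO : open O.
  apply: open_allL => a; case: ifP => _.
    rewrite (_ : [set y | 0 < dotv a y] = dotv a @^-1` [set r | 0 < r]) //.
    by apply: open_comp; [move=> y _; exact: dotv_continuous | exact: open_gt].
  rewrite (_ : [set y | dotv a y < 0] = dotv a @^-1` [set r | r < 0]) //.
  by apply: open_comp; [move=> y _; exact: dotv_continuous | exact: open_lt].
have cF : closed F.
  apply: closed_allL => a; case: ifP => _.
    rewrite (_ : [set y | 0 <= dotv a y] = dotv a @^-1` [set r | 0 <= r]) //.
    by apply: preimage_closed; [move=> y _; exact: dotv_continuous | exact: closed_ge].
  rewrite (_ : [set y | dotv a y <= 0] = dotv a @^-1` [set r | r <= 0]) //.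
  by apply: preimage_closed; [move=> y _; exact: dotv_continuous | exact: closed_le].
have eqO y : compl A y -> (O y <-> sgv A x y).
  move=> /allP cy; split.
    move=> h; apply/allP => a aA; have := h a aA; have := cy a aA.
    case: ifP => hx /= ny hy; first by rewrite hy.
    by rewrite (ltNge 0) (ltW hy).
  move=> /allP h a aA; have := h a aA; have := cy a aA.
  case: ifP => hx /= ny /eqP e; first by rewrite -e.
  have : ~~ (0 < dotv a y) by rewrite -e.
  rewrite -leNgt le_eqVlt => /orP[/eqP h0|//]; by rewrite h0 eqxx in ny.
have eqF y : compl A y -> (F y <-> sgv A x y).
  move=> /allP cy; split.
    move=> h; apply/allP => a aA; have := h a aA; have := cy a aA.
    case: ifP => hx /= ny hy.
      suff -> : 0 < dotv a y by [].
      by rewrite lt_neqAle hy andbT; apply: contra ny => /eqP <-.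
    by rewrite (ltNge 0) hy.
  move=> /allP h a aA; have := h a aA; have := cy a aA.
  case: ifP => hx /= ny /eqP e; first by rewrite ltW // -e.
  by rewrite leNgt -e.
have KB : K `&` cell A x = K.
  apply: Kc.
  - by exists x; split; [exact: connected_component_refl | exact: cell_self].
  - exists O => //; apply/seteqP; split => y [Ky hy]; have cy := KA y Ky;
      split => //; [apply/eqO => //; by case: hy | by split => //; apply/eqO].
  - exists F => //; apply/seteqP; split => y [Ky hy]; have cy := KA y Ky;
      split => //; [apply/eqF => //; by case: hy | by split => //; apply/eqF].
by move=> y Ky; rewrite -KB in Ky; case: Ky.
Qed.


Definition ndiff (R : realType) (d : nat) (L : seq 'rV[R]_d) (x y : 'rV[R]_d) :=
  count (fun a => (0 < dotv a x) != (0 < dotv a y)) L.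

Definition Cyc (R : realType) (d : nat) (L : seq 'rV[R]_d) (s : seq 'rV[R]_d) :=
 [/\ ~~ odd (size s), (2 <= size s)%N, all (compl L) s,
   (forall y, compl L y -> exists2 i, (i < size s)%N & sgv L (nth 0 s i) y) &
   (forall i j, (i < size s)%N -> (j < size s)%N ->
      sgv L (nth 0 s i) (nth 0 s j) -> i = j)] /\
   (forall i, (i < size s)%N ->
      ndiff L (nth 0 s i) (nth 0 s (i.+1 %% size s)) = 1%N).

Lemma sgv_sym (R : realType) (d : nat) (L : seq 'rV[R]_d) x y :
  sgv L x y -> sgv L y x.
Proof. by move=> /allP h; apply/allP => a aL; rewrite eq_sym h. Qed.

Lemma sgv_trans (R : realType) (d : nat) (L : seq 'rV[R]_d) x y z :
  sgv L x y -> sgv L y z -> sgv L x z.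
Proof.
by move=> /allP h1 /allP h2; apply/allP => a aL; rewrite (eqP (h1 a aL)) h2.
Qed.

Lemma cell_eq (R : realType) (d : nat) (L : seq 'rV[R]_d) x y :
  sgv L x y -> cell L x = cell L y.
Proof.
move=> h; apply/seteqP; split => z [cz sz]; split => //.
  exact: sgv_trans (sgv_sym h) sz.
exact: sgv_trans h sz.
Qed.

Lemma region_cell (R : realType) (d : nat) (A : seq 'rV[R]_d) C :
  region A C <-> exists2 x, compl A x & C = cell A x.
Proof.
split.
  move=> [x hx ->]; move: hx; rewrite complE => hx; exists x => //.
  by rewrite -complE comp_cell.
move=> [x hx ->]; exists x; first by rewrite complE.
by rewrite comp_cell.
Qed.

Lemma sep_cell (R : realType) (d : nat) (A : seq 'rV[R]_d) a x y :
  a \in A -> compl A x -> compl A y ->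
  separates a (cell A x) (cell A y) <-> (0 < dotv a x) != (0 < dotv a y).
Proof.
move=> aA cx cy; split.
  case=> [[h1 h2]|[h1 h2]].
    have := h1 x (cell_self cx); have := h2 y (cell_self cy).
    by move=> hy ->; rewrite (ltNge 0) (ltW hy).
  have := h1 x (cell_self cx); have := h2 y (cell_self cy).
  by move=> -> hx; rewrite (ltNge 0) (ltW hx).
have sgn z : compl A z -> (0 < dotv a z) = false -> dotv a z < 0.
  move=> /allP cz h; have := cz a aA; rewrite lt_neqAle => -> /=.
  by rewrite leNgt h.
case: (boolP (0 < dotv a x)) => hx /= hy.
  left; split => z [cz /allP sz].
    by rewrite -(eqP (sz a aA)).
  by apply: sgn => //; rewrite -(eqP (sz a aA)); apply/negbTE.
right; split => z [cz /allP sz].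
  by apply: sgn => //; rewrite -(eqP (sz a aA)); apply/negbTE.
by rewrite -(eqP (sz a aA)) (negbNE hy).
Qed.

Lemma final (R : realType) (d : nat) (A : seq 'rV[R]_d) s :
  Cyc A s -> (3 <= size s)%N ->
  exists s', hamiltonian_cycle A s' /\ ~~ odd (size s').
Proof.
move=> [[ev _ /allP call cov inj] adj] s3.
exists (map (cell A) s); rewrite size_map; split => //.
have nthc i : (i < size s)%N -> nth set0 (map (cell A) s) i = cell A (nth 0 s i).
  move=> hi; rewrite (nth_map 0) //.
rewrite /hamiltonian_cycle size_map; split => //.
- move=> i hi; rewrite nthc //; apply/region_cell; exists (nth 0 s i) => //.
  by apply: call; rewrite mem_nth.
- move=> C /region_cell [x cx ->]; have [i hi sx] := cov x cx.
  by exists i => //; rewrite nthc //; apply: cell_eq.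
- move=> i j hi hj; rewrite !nthc // => e; apply: inj => //.
  have : cell A (nth 0 s i) (nth 0 s j).
    by rewrite e; apply: cell_self; apply: call; rewrite mem_nth.
  by case.
- move=> i hi; have hi' : (i.+1 %% size s < size s)%N.
    by rewrite ltn_mod; case: (size s) hi.
  rewrite /adjacent !nthc //.
  apply: etrans (adj i hi); rewrite /ndiff; apply: eq_in_count => a aA /=.
  have H := sep_cell aA (call _ (mem_nth 0 hi)) (call _ (mem_nth 0 hi')).
  by apply/idP/idP => [/asboolP/H|/H/asboolP].
Qed.


Lemma sign_mul (R : realType) (x y : R) : x != 0 -> y != 0 ->
  (0 < x * y) = ((0 < x) == (0 < y)).
Proof.
move=> nx ny; case: (ltrgt0P x) nx => hx // _.
  by rewrite pmulr_rgt0 //; case: (0 < y).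
by rewrite nmulr_rgt0 //; case: (ltrgt0P y) ny.
Qed.

Lemma count_le_sub (T : eqType) (s : seq T) (p q : pred T) :
  {in s, forall x, p x -> q x} -> (count p s <= count q s)%N.
Proof.
elim: s => [|y s IH] //= sub; apply: leq_add.
  by case: (boolP (p y)) => py //; rewrite (sub y (mem_head _ _) py).
by apply: IH => z zs; apply: sub; rewrite inE zs orbT.
Qed.

Lemma count_lt_sub (T : eqType) (s : seq T) (p q : pred T) :
  {in s, forall x, p x -> q x} -> (exists2 x, x \in s & q x && ~~ p x) ->
  (count p s < count q s)%N.
Proof.
elim: s => [|y s IH] //=; first by move=> _ [].
move=> sub [x]; rewrite inE => /orP[/eqP ->|xs] hx.
  case/andP: hx => -> /negbTE ->; rewrite add0n add1n ltnS.
  by apply: count_le_sub => z zs; apply: sub; rewrite inE zs orbT.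
have sub' : {in s, forall x, p x -> q x}.
  by move=> z zs; apply: sub; rewrite inE zs orbT.
have := IH sub' (ex_intro2 _ _ x xs hx).
case: (boolP (p y)) => py; first by rewrite (sub y (mem_head _ _) py) ltn_add2l.
rewrite add0n => h; apply: (leq_trans h); exact: leq_addl.
Qed.

Lemma count_iota_lt (j k : nat) : (j <= k)%N ->
  count (fun i => i < j)%N (iota 0 k) = j.
Proof.
move=> jk; rewrite -(subnKC jk) iotaD count_cat add0n.
rewrite (@eq_in_count _ _ predT (iota 0 j)); last first.
  by move=> i; rewrite mem_iota add0n => /andP[_ ->].
rewrite count_predT size_iota (@eq_in_count _ _ pred0); last first.
  by move=> i; rewrite mem_iota => /andP[h _] /=; rewrite ltnNge h.
by rewrite count_pred0 addn0.
Qed.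

Section Step.
Variables (R : realType) (d : nat) (A0 A1 : seq 'rV[R]_d) (v : 'rV[R]_d).
Hypothesis H0v : forall a, a \in A0 -> dotv a v = 0.
Hypothesis H1v : forall a, a \in A1 -> dotv a v != 0.
Hypothesis u1 : uniq A1.
Hypothesis pw : forall a b, a \in A1 -> b \in A1 -> a != b ->
  exists2 a0, a0 \in A0 & hyp a `&` hyp b `<=` hyp a0.

Definition tt (a c : 'rV[R]_d) : R := - dotv a c / dotv a v.

Lemma dot_line a c s : a \in A1 ->
  dotv a (c + s *: v) = dotv a v * (s - tt a c).
Proof.
move=> aA; have nv := H1v aA; rewrite dotvD dotvZ /tt.
by field.
Qed.

Lemma dot_line0 a c s : a \in A0 -> dotv a (c + s *: v) = dotv a c.
Proof. by move=> aA; rewrite dotvD dotvZ H0v // mulr0 addr0. Qed.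

Lemma tt_lin a c y (l : R) : tt a (c + l *: (y - c)) = tt a c + l * (tt a y - tt a c).
Proof.
rewrite /tt dotvD dotvZ dotvB.
have [->|nv] := eqVneq (dotv a v) 0; first by rewrite !invr0 !mulr0 subrr mulr0 addr0.
by field.
Qed.

Lemma no_coinc a b c : compl A0 c -> a \in A1 -> b \in A1 -> a != b ->
  tt a c != tt b c.
Proof.
move=> /allP cc aA bA ab; apply/negP => /eqP e.
have [a0 a0A sub] := pw aA bA ab.
set w := c + tt a c *: v.
have : hyp a0 w.
  apply: sub; split; rewrite /hyp /= /w dot_line //.
    by rewrite subrr mulr0.
  by rewrite e subrr mulr0.
by rewrite /hyp /= /w dot_line0 // => h; move: (cc a0 a0A); rewrite h eqxx.
Qed.

Lemma uniq_tt c : compl A0 c -> uniq (map (tt^~ c) A1).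
Proof.
move=> cc; rewrite map_inj_in_uniq // => a b aA bA e.
apply/eqP; apply: contraT => ab; move: (no_coinc cc aA bA ab).
by rewrite e eqxx.
Qed.

Lemma sign_tt a z : a \in A1 -> dotv a z != 0 ->
  ((0 < dotv a z) == (0 < dotv a v)) = (tt a z < 0).
Proof.
move=> aA nz; have nv := H1v aA.
have e : dotv a z = dotv a v * (- tt a z) by rewrite /tt; field.
have ntt : - tt a z != 0 by apply: contra nz => /eqP h; rewrite e h mulr0.
rewrite e sign_mul // oppr_gt0.
by case: (0 < dotv a v); case: (tt a z < 0).
Qed.

Definition kk := size A1.
Definition us c := sort <=%R (map (tt^~ c) A1).

Lemma size_us c : size (us c) = kk.
Proof. by rewrite /us size_sort size_map. Qed.

Lemma mem_us a c : a \in A1 -> tt a c \in us c.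
Proof. by move=> aA; rewrite /us mem_sort; apply: map_f. Qed.

Lemma us_lt c i i' : compl A0 c -> (i < i')%N -> (i' < kk)%N ->
  nth 0 (us c) i < nth 0 (us c) i'.
Proof.
move=> cc ii' i'k.
have so : sorted <%R (us c) by rewrite /us sort_lt_sorted uniq_tt.
apply: (sorted_ltn_nth lt_trans) => //; rewrite inE size_us //.
exact: ltn_trans ii' i'k.
Qed.

Lemma us_le c i i' : compl A0 c -> (i <= i')%N -> (i' < kk)%N ->
  nth 0 (us c) i <= nth 0 (us c) i'.
Proof.
move=> cc; rewrite leq_eqVlt => /orP[/eqP -> //|ii'] i'k.
exact/ltW/us_lt.
Qed.

Definition mid c (j : nat) : R :=
  if j == 0%N then nth 0 (us c) 0 - 1
  else if j == kk then nth 0 (us c) kk.-1 + 1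
  else (nth 0 (us c) j.-1 + nth 0 (us c) j) / 2.

Lemma mid_prop c j i : compl A0 c -> (j <= kk)%N -> (i < kk)%N ->
  (if (i < j)%N then nth 0 (us c) i < mid c j else mid c j < nth 0 (us c) i).
Proof.
move=> cc jk ik.
have [j0|j0] := eqVneq j 0%N.
  rewrite j0 /mid eqxx /=.
  apply: (@lt_le_trans _ _ (nth 0 (us c) 0)); first by rewrite ltrBlDr ltrDl.
  exact: us_le.
have [jk'|jk'] := eqVneq j kk.
  rewrite /mid (negbTE j0) jk' eqxx ik.
  have k1 : (0 < kk)%N by exact: leq_ltn_trans (leq0n i) ik.
  apply: (@le_lt_trans _ _ (nth 0 (us c) kk.-1)); last by rewrite ltrDl.
  by apply: us_le => //; [rewrite -ltnS prednK | rewrite prednK].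
rewrite /mid (negbTE j0) (negbTE jk').
have j1 : (0 < j)%N by rewrite lt0n j0.
have jk2 : (j < kk)%N by rewrite ltn_neqAle jk'.
have hlt := @us_lt c j.-1 j cc ltac:(by rewrite ltn_predL) jk2.
case: ifP => ij.
  apply: (@le_lt_trans _ _ (nth 0 (us c) j.-1)); last lra.
  by apply: us_le => //; [rewrite -ltnS prednK | exact: leq_ltn_trans (leq_pred j) jk2].
apply: (@lt_le_trans _ _ (nth 0 (us c) j)); first lra.
by apply: us_le => //; rewrite leqNgt ij.
Qed.

Definition pt c j := c + mid c j *: v.
Definition Qs (y a : 'rV[R]_d) := (0 < dotv a y) == (0 < dotv a v).

Lemma tt_mid a c j : compl A0 c -> a \in A1 -> (j <= kk)%N ->
  (tt a c < mid c j) = (index (tt a c) (us c) < j)%N /\ tt a c != mid c j.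
Proof.
move=> cc aA jk.
have mi := mem_us c aA.
have ik : (index (tt a c) (us c) < kk)%N by rewrite -(size_us c) index_mem.
have := mid_prop cc jk ik; rewrite nth_index //.
case: ifP => _ h.
  by split => //; rewrite lt_eqF.
by split; [rewrite ltNge (ltW h) | rewrite gt_eqF].
Qed.

Lemma pt_dot0 a c j : a \in A0 -> dotv a (pt c j) = dotv a c.
Proof. by move=> aA; rewrite /pt dot_line0. Qed.

Lemma pt_sgn1 a c j : compl A0 c -> a \in A1 -> (j <= kk)%N ->
  (0 < dotv a (pt c j)) = ((0 < dotv a v) == (tt a c < mid c j)) /\
  dotv a (pt c j) != 0.
Proof.
move=> cc aA jk; have [_ ne] := tt_mid cc aA jk.
have nz : mid c j - tt a c != 0 by rewrite subr_eq0 eq_sym.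
rewrite /pt dot_line // sign_mul ?H1v // subr_gt0; split => //.
by rewrite mulf_neq0 ?H1v.
Qed.

Lemma pt_compl c j : compl A0 c -> (j <= kk)%N -> compl (A0 ++ A1) (pt c j).
Proof.
move=> cc jk; rewrite /compl all_cat; apply/andP; split; apply/allP => a aA.
  by rewrite pt_dot0 //; exact: (allP cc).
by have [_ ->] := pt_sgn1 cc aA jk.
Qed.

Lemma Qs_pt a c j : compl A0 c -> a \in A1 -> (j <= kk)%N ->
  Qs (pt c j) a = (tt a c < mid c j).
Proof.
move=> cc aA jk; rewrite /Qs; have [-> _] := pt_sgn1 cc aA jk.
by case: (0 < dotv a v); case: (tt a c < mid c j).
Qed.

Lemma count_Qs_pt c j : compl A0 c -> (j <= kk)%N ->
  count (Qs (pt c j)) A1 = j.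
Proof.
move=> cc jk.
rewrite (eq_in_count (a2 := fun a => tt a c < mid c j)); last first.
  by move=> a aA; exact: Qs_pt.
rewrite -(count_map (tt^~ c) (fun x => x < mid c j)).
have ps : perm_eq (us c) (map (tt^~ c) A1) by rewrite /us perm_sort.
rewrite -(permP ps).
rewrite -(mkseq_nth 0 (us c)) /mkseq count_map size_us.
rewrite -[RHS](count_iota_lt jk); apply: eq_in_count => i.
rewrite mem_iota add0n /= => ik.
have := mid_prop cc jk ik; case: ifP => // _ h.
by rewrite ltNge (ltW h).
Qed.

Lemma ndiff_cat (L1 L2 : seq 'rV[R]_d) x y :
  ndiff (L1 ++ L2) x y = (ndiff L1 x y + ndiff L2 x y)%N.
Proof. by rewrite /ndiff count_cat. Qed.

Lemma ndiff_sym (L : seq 'rV[R]_d) x y : ndiff L x y = ndiff L y x.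
Proof. by rewrite /ndiff; apply: eq_count => a; rewrite eq_sym. Qed.

Lemma ndiff0_pt c c' j j' : ndiff A0 (pt c j) (pt c' j') = ndiff A0 c c'.
Proof. by apply: eq_in_count => a aA /=; rewrite !pt_dot0. Qed.

Lemma fib_adj c j : compl A0 c -> (j < kk)%N ->
  ndiff (A0 ++ A1) (pt c j) (pt c j.+1) = 1%N.
Proof.
move=> cc jk; rewrite ndiff_cat ndiff0_pt.
have -> : ndiff A0 c c = 0%N.
  by rewrite /ndiff (eq_count (a2 := pred0)) ?count_pred0 // => a /=; rewrite eqxx.
rewrite add0n /ndiff.
rewrite (eq_in_count (a2 := fun a => tt a c == nth 0 (us c) j)); last first.
  move=> a aA /=.
  have [h1 _] := pt_sgn1 cc aA (ltnW jk); have [h2 _] := pt_sgn1 cc aA jk.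
  rewrite h1 h2; have [e1 _] := tt_mid cc aA (ltnW jk); have [e2 _] := tt_mid cc aA jk.
  rewrite e1 e2.
  have mi := mem_us c aA.
  have uu : uniq (us c) by rewrite /us sort_uniq uniq_tt.
  have -> : (tt a c == nth 0 (us c) j) = (index (tt a c) (us c) == j).
    apply/idP/idP => [/eqP ->|/eqP <-]; last by rewrite nth_index.
    by rewrite index_uniq // size_us.
  rewrite ltnS.
  set ii := index _ _.
  by case: (0 < dotv a v); case: (ltngtP ii j).
have -> : count (fun a => tt a c == nth 0 (us c) j) A1 =
    count (pred1 (nth 0 (us c) j)) (map (tt^~ c) A1) by rewrite count_map.
rewrite count_uniq_mem ?uniq_tt //.
have ps : perm_eq (us c) (map (tt^~ c) A1) by rewrite /us perm_sort.
by rewrite -(perm_mem ps) mem_nth // size_us.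
Qed.

Lemma pt_bot a c : compl A0 c -> a \in A1 -> (0 < dotv a (pt c 0)) = ~~ (0 < dotv a v).
Proof.
move=> cc aA; have [-> _] := pt_sgn1 cc aA (leq0n _).
have [-> _] := tt_mid cc aA (leq0n _).
by rewrite ltn0; case: (0 < dotv a v).
Qed.

Lemma pt_top a c : compl A0 c -> a \in A1 -> (0 < dotv a (pt c kk)) = (0 < dotv a v).
Proof.
move=> cc aA; have [-> _] := pt_sgn1 cc aA (leqnn _).
have [-> _] := tt_mid cc aA (leqnn _).
have -> : (index (tt a c) (us c) < kk)%N by rewrite -(size_us c) index_mem mem_us.
by case: (0 < dotv a v).
Qed.

Lemma cross_bot c c' : compl A0 c -> compl A0 c' ->
  ndiff (A0 ++ A1) (pt c 0) (pt c' 0) = ndiff A0 c c'.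
Proof.
move=> cc cc'; rewrite ndiff_cat ndiff0_pt /ndiff (@eq_in_count _ _ pred0 A1).
  by rewrite count_pred0 addn0.
by move=> a aA /=; rewrite !pt_bot // eqxx.
Qed.

Lemma cross_top c c' : compl A0 c -> compl A0 c' ->
  ndiff (A0 ++ A1) (pt c kk) (pt c' kk) = ndiff A0 c c'.
Proof.
move=> cc cc'; rewrite ndiff_cat ndiff0_pt /ndiff (@eq_in_count _ _ pred0 A1).
  by rewrite count_pred0 addn0.
by move=> a aA /=; rewrite !pt_top // eqxx.
Qed.

Lemma fib_inj c j j' : compl A0 c -> (j <= kk)%N -> (j' <= kk)%N ->
  sgv (A0 ++ A1) (pt c j) (pt c j') -> j = j'.
Proof.
move=> cc jk jk' /allP s.
rewrite -(count_Qs_pt cc jk) -(count_Qs_pt cc jk'); apply: eq_in_count => a aA.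
by rewrite /Qs (eqP (s a _)) // mem_cat aA orbT.
Qed.

Lemma tt_neq0 a y : a \in A1 -> dotv a y != 0 -> tt a y != 0.
Proof.
move=> aA ny; rewrite /tt mulf_neq0 ?invr_neq0 ?H1v //.
by rewrite oppr_eq0.
Qed.

Lemma compat c y a b : compl A0 c -> compl A0 y -> sgv A0 c y ->
  a \in A1 -> b \in A1 -> dotv a y != 0 -> dotv b y != 0 ->
  Qs y a -> ~~ Qs y b -> tt a c < tt b c.
Proof.
move=> cc cy scy aA bA nay nby qa qb.
have ab : a != b by apply: contraNneq qb => <-.
rewrite /Qs sign_tt // in qa; rewrite /Qs sign_tt // in qb.
have hb : 0 < tt b y.
  by rewrite lt_neqAle eq_sym tt_neq0 //= leNgt.
rewrite ltNge; apply/negP => hle.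
have hlt : tt b c < tt a c.
  by rewrite lt_neqAle hle andbT; apply: no_coinc => //; rewrite eq_sym.
set fc := tt a c - tt b c; set fy := tt a y - tt b y.
have fc0 : 0 < fc by rewrite subr_gt0.
have fy0 : fy < 0 by rewrite /fy; lra.
set l := fc / (fc - fy).
have den : 0 < fc - fy by lra.
have l0 : 0 <= l by rewrite divr_ge0 // ltW.
have l1 : l <= 1 by rewrite ler_pdivrMr // mul1r; lra.
have cz : cell A0 c (c + l *: (y - c)).
  by apply: cell_convex; [exact: cell_self | by split | by apply/andP; split].
case: cz => cz _.
have := no_coinc cz aA bA ab; rewrite !tt_lin.
have -> : tt a c + l * (tt a y - tt a c) = tt b c + l * (tt b y - tt b c).
  apply/eqP; rewrite -subr_eq0.
  have -> : tt a c + l * (tt a y - tt a c) - (tt b c + l * (tt b y - tt b c))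
      = fc + l * (fy - fc) by rewrite /fc /fy; ring.
  rewrite /l; apply/eqP; field; lra.
by rewrite eqxx.
Qed.

Lemma fib_cover c y : compl A0 c -> compl (A0 ++ A1) y -> sgv A0 c y ->
  exists2 j, (j <= kk)%N & sgv (A0 ++ A1) (pt c j) y.
Proof.
move=> cc; rewrite /compl all_cat => /andP[cy0 cy1] scy.
set j := count (Qs y) A1.
have jk : (j <= kk)%N by rewrite /j /kk count_size.
have cT : count (fun a => tt a c < mid c j) A1 = j.
  rewrite -[RHS](count_Qs_pt cc jk); apply: eq_in_count => a aA.
  by rewrite Qs_pt.
have ny a : a \in A1 -> dotv a y != 0 by move=> aA; exact: (allP cy1).
have claim : {in A1, forall a, Qs y a = (tt a c < mid c j)}.
  move=> a aA; apply/idP/idP => [qa|ta]; apply: contraT => h.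
    have sub : {in A1, forall b, tt b c < mid c j -> Qs y b}.
      move=> b bA tb; apply: contraT => qb.
      have := compat cc cy0 scy aA bA (ny a aA) (ny b bA) qa qb.
      by move: h; rewrite -leNgt => h1 h2; move: (lt_le_trans (lt_trans h2 tb) h1); rewrite ltxx.
    have := count_lt_sub sub (ex_intro2 _ _ a aA (introT andP (conj qa h))).
    by rewrite cT ltnn.
  have sub : {in A1, forall b, Qs y b -> tt b c < mid c j}.
    move=> b bA qb; apply: contraT => tb.
    have := compat cc cy0 scy bA aA (ny b bA) (ny a aA) qb h.
    by move: tb; rewrite -leNgt => h1 h2; move: (le_lt_trans h1 (lt_trans h2 ta)); rewrite ltxx.
  have := count_lt_sub sub (ex_intro2 _ _ a aA (introT andP (conj ta h))).
  by rewrite cT ltnn.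
exists j => //; apply/allP => a; rewrite mem_cat => /orP[aA|aA].
  by rewrite pt_dot0 //; exact: (allP scy).
have [-> _] := pt_sgn1 cc aA jk; rewrite -claim // /Qs.
by case: (0 < dotv a v); case: (0 < dotv a y).
Qed.

Definition jj (i j : nat) := if odd i then (kk - j)%N else j.
Definition gg (s0 : seq 'rV[R]_d) n :=
  pt (nth 0 s0 (n %/ kk.+1)%N) (jj (n %/ kk.+1)%N (n %% kk.+1)%N).

Lemma divmodK i j : (j < kk.+1)%N ->
  ((i * kk.+1 + j) %/ kk.+1 = i /\ (i * kk.+1 + j) %% kk.+1 = j)%N.
Proof.
move=> jk; rewrite divnMDl // divn_small // addn0; split => //.
by rewrite modnMDl modn_small.
Qed.

Lemma jj_le i j : (j < kk.+1)%N -> (jj i j <= kk)%N.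
Proof. by rewrite /jj; case: (odd i) => /=; lia. Qed.

Lemma jj_inj i j j' : (j <= kk)%N -> (j' <= kk)%N -> jj i j = jj i j' -> j = j'.
Proof. by rewrite /jj; case: (odd i) => /=; lia. Qed.

Lemma jjK i j : (j <= kk)%N -> jj i (jj i j) = j.
Proof. by rewrite /jj; case: (odd i) => /=; lia. Qed.

Lemma sgv_cat (L1 L2 : seq 'rV[R]_d) x y :
  sgv (L1 ++ L2) x y = sgv L1 x y && sgv L2 x y.
Proof. by rewrite /sgv all_cat. Qed.

Lemma sgv0_pt c c' j j' : sgv A0 (pt c j) (pt c' j') = sgv A0 c c'.
Proof. by apply: eq_in_all => a aA /=; rewrite !pt_dot0. Qed.

Lemma step_cyc s0 : Cyc A0 s0 -> A1 != [::] ->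
  exists s, Cyc (A0 ++ A1) s /\ (4 <= size s)%N.
Proof.
move=> [[ev0 sz0 /allP call0 cov0 inj0] adj0] ne.
have k1 : (0 < kk)%N by rewrite /kk lt0n size_eq0.
set m2 := size s0 in ev0 sz0 cov0 inj0 adj0.
set K := kk.+1.
set N := (m2 * K)%N.
set s := map (gg s0) (iota 0 N).
have sizes : size s = N by rewrite size_map size_iota.
have nths n : (n < N)%N -> nth 0 s n = gg s0 n.
  by move=> hn; rewrite (nth_map 0%N) ?size_iota // nth_iota.
have iN n : (n < N)%N -> (n %/ K < m2)%N by move=> hn; rewrite ltn_divLR.
have jK n : (n %% K < K)%N by rewrite ltn_mod.
have cs i : (i < m2)%N -> compl A0 (nth 0 s0 i) by move=> hi; apply: call0; rewrite mem_nth.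
have cg n : (n < N)%N -> compl (A0 ++ A1) (gg s0 n).
  move=> hn; apply: pt_compl; [exact: cs (iN n hn)| exact: jj_le].
have N4 : (4 <= N)%N by rewrite /N; apply: (@leq_mul 2 2) => //; rewrite /K ltnS.
exists s; split; last by rewrite sizes.
rewrite /Cyc sizes; split; first split.
- by rewrite /N oddM negb_and ev0.
- exact: leq_trans N4.
- apply/allP => x /mapP [n]; rewrite mem_iota add0n => /andP[_ hn] ->.
  exact: cg.
- move=> y cy.
  have cy0 : compl A0 y by move: cy; rewrite /compl all_cat => /andP[].
  have [i hi si] := cov0 y cy0.
  have [j jk sj] := fib_cover (cs i hi) cy si.
  have jjlt : (jj i j < K)%N by rewrite /K ltnS jj_le // ltnS.
  have [e1 e2] := divmodK i jjlt.
  have hn : (i * K + jj i j < N)%N.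
    rewrite /N; have : (i.+1 * K <= m2 * K)%N by rewrite leq_mul2r hi orbT.
    by rewrite mulSn; lia.
  exists (i * K + jj i j)%N => //.
  by rewrite nths // /gg e1 e2 jjK.
- move=> n n' hn hn'; rewrite !nths // /gg => h.
  have := h; rewrite sgv_cat sgv0_pt => /andP[h0 _].
  have ei := inj0 _ _ (iN n hn) (iN n' hn') h0.
  rewrite -ei in h.
  have ej := fib_inj (cs _ (iN n hn)) (jj_le _ (jK n)) (jj_le _ (jK n')) h.
  have ej' := jj_inj (ltnSE (jK n)) (ltnSE (jK n')) ej.
  by rewrite (divn_eq n K) (divn_eq n' K) ei ej'.
move=> n hn.
have hi := iN n hn; set i := (n %/ K)%N in hi.
set j := (n %% K)%N.
have ej : n = (i * K + j)%N by rewrite /i /j -divn_eq.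
have jk : (j <= kk)%N by rewrite -ltnS jK.
have ci := cs i hi.
rewrite nths // /gg -/i -/j.
have [jlt|jeq] := ltnP j kk.
  have hn1 : (n.+1 < N)%N.
    rewrite /N; have : (i.+1 * K <= m2 * K)%N by rewrite leq_mul2r hi orbT.
    by rewrite mulSn /K; lia.
  rewrite modn_small // nths //.
  have [e1 e2] := divmodK i (j := j.+1) ltac:(by rewrite /K ltnS).
  rewrite /gg (_ : n.+1 = i * K + j.+1)%N; last by rewrite ej addnS.
  rewrite e1 e2 /jj; case: (odd i); last exact: fib_adj.
  rewrite ndiff_sym (_ : (kk - j)%N = (kk - j.+1).+1); last by lia.
  by apply: fib_adj => //; lia.
have jE : j = kk by apply/eqP; rewrite eqn_leq jk jeq.
have en1 : n.+1 = (i.+1 * K)%N by rewrite ej jE mulSn /K; lia.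
have [i1|i1] := ltnP i.+1 m2.
  have hn1 : (n.+1 < N)%N by rewrite en1 /N ltn_mul2r i1 andbT.
  rewrite modn_small // nths //.
  have [e1 e2] := divmodK i.+1 (j := 0) ltac:(by []).
  rewrite /gg en1 -[(i.+1 * K)%N]addn0 e1 e2 /jj /= jE subnn.
  have ci1 := cs i.+1 i1.
  case: (boolP (odd i)) => oi /=.
    by rewrite cross_bot //; have := adj0 i hi; rewrite modn_small.
  have -> : (kk - 0)%N = kk by lia.
  by rewrite cross_top //; have := adj0 i hi; rewrite modn_small.
have im : i.+1 = m2 by apply/eqP; rewrite eqn_leq hi i1.
have -> : (n.+1 %% N = 0)%N by rewrite en1 im /N modnn.
rewrite nths; last by lia.
have m0 : (0 < m2)%N by lia.
rewrite /gg div0n mod0n /jj /= jE.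
have oi : odd i.
  have := ev0; rewrite -im /=; by case: (odd i).
rewrite oi subnn cross_bot //; last exact: cs.
have := adj0 i hi; by rewrite im modnn.
Qed.
End Step.


Definition good (R : realType) (d : nat) (L : seq 'rV[R]_d) :=
  [/\ uniq L, (forall a, a \in L -> a != 0) &
      (forall a b, a \in L -> b \in L -> hyp a = hyp b -> a = b)].

Lemma arr_good (R : realType) (d : nat) (L : seq 'rV[R]_d) :
  arrangement L <-> good L.
Proof.
split.
  move=> [nz inj]; split => //.
    apply/negbNE/negP => /(uniqPn 0) [i [j [ij js e]]].
    have := inj i j (ltn_trans ij js) js; rewrite e => /(_ erefl) ei.
    by rewrite ei ltnn in ij.
  move=> a b aL bL e.
  rewrite -(nth_index 0 aL) -(nth_index 0 bL); congr nth.
  by apply: inj; rewrite ?index_mem // !nth_index.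
move=> [u nz inj]; split => // i j il jl e.
apply/eqP; rewrite -(nth_uniq 0 il jl u); apply/eqP.
by apply: inj => //; apply: mem_nth.
Qed.

Lemma good_perm (R : realType) (d : nat) (L L' : seq 'rV[R]_d) :
  perm_eq L L' -> good L -> good L'.
Proof.
move=> p [u nz inj]; split.
- by rewrite -(perm_uniq p).
- by move=> a; rewrite -(perm_mem p); exact: nz.
- by move=> a b; rewrite -!(perm_mem p); exact: inj.
Qed.

Lemma good_catl (R : realType) (d : nat) (L1 L2 : seq 'rV[R]_d) :
  good (L1 ++ L2) -> good L1.
Proof.
move=> [u nz inj]; split.
- by move: u; rewrite cat_uniq => /andP[].
- by move=> a aL; apply: nz; rewrite mem_cat aL.
- by move=> a b aL bL; apply: inj; rewrite mem_cat ?aL ?bL.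
Qed.

Definition matL (R : realType) (d : nat) (L : seq 'rV[R]_d) :=
  \matrix_(i < size L) nth 0 L i.

Lemma mem_sub_matL (R : realType) (d : nat) (L : seq 'rV[R]_d) a :
  a \in L -> (a <= matL L)%MS.
Proof.
move=> aL; have il : (index a L < size L)%N by rewrite index_mem.
have := row_sub (Ordinal il) (matL L); rewrite rowK /= nth_index //.
Qed.

Lemma rank_grow (R : realType) (d : nat) (A L0 : seq 'rV[R]_d) :
  (forall a, a \in A -> (a <= matL L0)%MS) -> (arr_rank A <= arr_rank L0)%N.
Proof.
move=> h; rewrite /arr_rank -!/(matL _); apply: mxrankS.
by apply/row_subP => i; rewrite rowK; apply: h; apply: mem_nth.
Qed.

Lemma v_exists (R : realType) (d : nat) (L0 : seq 'rV[R]_d) a1 :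
  ~~ (a1 <= matL L0)%MS ->
  exists v, (forall a, a \in L0 -> dotv a v = 0) /\ dotv a1 v != 0.
Proof.
rewrite submxE => h.
have [j hj] : exists j, (a1 *m cokermx (matL L0)) 0 j != 0.
  apply/existsP; apply: contraR h => /existsPn h; apply/eqP/rowP => j.
  by rewrite [RHS]mxE; have := h j; rewrite negbK => /eqP.
set v := \row_k cokermx (matL L0) k j.
have dv a : dotv a v = (a *m cokermx (matL L0)) 0 j.
  by rewrite /dotv mxE; apply: eq_bigr => k _; rewrite mxE.
exists v; split; last by rewrite dv.
move=> a aL; rewrite dv.
have il : (index a L0 < size L0)%N by rewrite index_mem.
have : row (Ordinal il) (matL L0 *m cokermx (matL L0)) = 0 by rewrite mulmx_coker row0.
by rewrite row_mul rowK /= nth_index // => ->; rewrite mxE.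
Qed.

Lemma H1v_derive (R : realType) (d : nat) (L0 L1 : seq 'rV[R]_d) (v a1 : 'rV[R]_d) :
  good (L0 ++ L1) ->
  (forall a b, a \in L1 -> b \in L1 -> a != b ->
     exists2 a0, a0 \in L0 & hyp a `&` hyp b `<=` hyp a0) ->
  (forall a, a \in L0 -> dotv a v = 0) -> a1 \in L1 -> dotv a1 v != 0 ->
  forall a, a \in L1 -> dotv a v != 0.
Proof.
move=> [u nz inj] pw H0 a1L n1 a aL; apply/negP => /eqP av.
have aa1 : a != a1 by apply: contraNneq n1 => <-; rewrite av.
have [a0 a0L sub] := pw a a1 aL a1L aa1.
have s2 : hyp a `<=` hyp a0.
  move=> x hx; set t := - dotv a1 x / dotv a1 v.
  have : hyp a0 (x + t *: v).
    apply: sub; split; rewrite /hyp /= dotvD dotvZ.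
      by rewrite av mulr0 addr0.
    by rewrite /t; field.
  by rewrite /hyp /= dotvD dotvZ H0 // mulr0 addr0.
have a0L' : a0 \in L0 ++ L1 by rewrite mem_cat a0L.
have aL' : a \in L0 ++ L1 by rewrite mem_cat aL orbT.
have e := hyp_sub_eq (nz a0 a0L') (nz a aL') s2.
have ea := inj a0 a a0L' aL' e.
by move: u; rewrite cat_uniq => /and3P[_ /hasPn /(_ a aL) /=]; rewrite -ea a0L.
Qed.

Lemma build_step (R : realType) (d : nat) (L0 L1 : seq 'rV[R]_d) s0 a1 :
  good (L0 ++ L1) ->
  (forall a b, a \in L1 -> b \in L1 -> a != b ->
     exists2 a0, a0 \in L0 & hyp a `&` hyp b `<=` hyp a0) ->
  a1 \in L1 -> ~~ (a1 <= matL L0)%MS -> Cyc L0 s0 ->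
  exists s, Cyc (L0 ++ L1) s /\ (4 <= size s)%N.
Proof.
move=> g pw a1L ns c0.
have [v [H0 n1]] := v_exists ns.
have H1 := H1v_derive g pw H0 a1L n1.
have u1 : uniq L1 by case: g => u _ _; move: u; rewrite cat_uniq => /and3P[].
apply: (step_cyc H0 H1 u1 pw c0).
by apply/eqP => e; rewrite e in a1L.
Qed.

Lemma dotvZl (R : realType) (d : nat) (a x : 'rV[R]_d) (k : R) :
  dotv (k *: a) x = k * dotv a x.
Proof. by rewrite dotvC dotvZ dotvC. Qed.

Lemma cyc1 (R : realType) (d : nat) (a : 'rV[R]_d) :
  a != 0 -> Cyc [:: a] [:: a; - a].
Proof.
move=> na; have g := dotv_self_gt0 na.
have g' : dotv a (- a) < 0 by rewrite dotvN oppr_lt0.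
have f1 : (0 < dotv a (- a)) = false by rewrite ltNge (ltW g').
split; first split => //.
- by rewrite /= /compl /= (gt_eqF g) (lt_eqF g').
- move=> y /=; rewrite /compl /= andbT => ny.
  case: (boolP (0 < dotv a y)) => hy.
    by exists 0%N => //; rewrite /sgv /= g.
  by exists 1%N => //; rewrite /sgv /= f1.
- move=> i j; case: i => [|[|i]] //; case: j => [|[|j]] //;
    by rewrite /sgv /= g f1.
- move=> i; case: i => [|[|i]] //= _; by rewrite /ndiff /= g f1.
Qed.

Lemma base (R : realType) (d : nat) (A : seq 'rV[R]_d) :
  good A -> arr_rank A = 2%N -> exists s, Cyc A s /\ (4 <= size s)%N.
Proof.
case: A => [|ax A1] g r2.
  have := rank_leq_row (matL ([::] : seq 'rV[R]_d)).
  by rewrite /matL; move: r2; rewrite /arr_rank => ->.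
have [u nz inj] := g.
have nax : ax != 0 by apply: nz; rewrite mem_head.
have rA : (\rank (matL (ax :: A1)) <= 2)%N by rewrite -[matL _]/(\matrix_(i < _) _) -/(arr_rank _) r2.
have [a1 a1L na1] : exists2 a1, a1 \in A1 & ~~ (a1 <= matL [:: ax])%MS.
  case: (boolP (all (fun a => a <= matL [:: ax])%MS A1)) => h; last first.
    by have [a1 a1L na1] := allPn h; exists a1.
  have : (arr_rank (ax :: A1) <= arr_rank [:: ax])%N.
    apply: rank_grow => a; rewrite inE => /orP[/eqP ->|aL].
      by apply: mem_sub_matL; rewrite mem_head.
    exact: (allP h).
  by rewrite r2 => /leq_trans /(_ (rank_leq_row _)).
have pw : forall a b, a \in A1 -> b \in A1 -> a != b ->
    exists2 a0, a0 \in [:: ax] & hyp a `&` hyp b `<=` hyp a0.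
  move=> a b aL bL ab; exists ax; first by rewrite mem_head.
  have aL' : a \in ax :: A1 by rewrite inE aL orbT.
  have bL' : b \in ax :: A1 by rewrite inE bL orbT.
  have na := nz a aL'; have nb := nz b bL'.
  have nba : ~~ (b <= a)%MS.
    apply/negP => /sub_rVP [k ek].
    have k0 : k != 0 by apply: contraNneq nb => k0; rewrite ek k0 scale0r.
    have : hyp a = hyp b.
      apply/seteqP; split => x; rewrite /hyp /= ek dotvZl.
        by move=> ->; rewrite mulr0.
      by move/eqP; rewrite mulf_eq0 (negbTE k0) => /eqP.
    by move/(inj a b aL' bL') => e; rewrite e eqxx in ab.
  have lt1 : (a < a + b)%MS by rewrite ltmxE addsmxSl addsmx_sub submx_refl.
  have r1 := rank_ltmx lt1; rewrite rank_rV na in r1.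
  have sax : (ax <= a + b)%MS.
    apply: contraT => nax'.
    have lt2 : (a + b < (a + b) + ax)%MS by rewrite ltmxE addsmxSl addsmx_sub submx_refl.
    have r3 := rank_ltmx lt2.
    have : ((a + b) + ax <= matL (ax :: A1))%MS.
      by rewrite !addsmx_sub !mem_sub_matL // mem_head.
    move/mxrankS => r4; have := leq_ltn_trans r1 r3.
    by rewrite ltnNge (leq_trans r4 rA).
  move=> x [hxa hxb]; have [[u1 u2] /= e] := sub_addsmxP sax.
  by rewrite /hyp /= e dotvDl !dotv_mul hxa hxb !mulr0 addr0.
exact: (build_step (L0 := [:: ax]) (L1 := A1) g pw a1L na1 (cyc1 nax)).
Qed.


Lemma Cyc_perm (R : realType) (d : nat) (L L' s : seq 'rV[R]_d) :
  perm_eq L L' -> Cyc L s -> Cyc L' s.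
Proof.
move=> p.
have ec x : compl L x = compl L' x by rewrite /compl (perm_all _ p).
have es x y : sgv L x y = sgv L' x y by rewrite /sgv (perm_all _ p).
have en x y : ndiff L x y = ndiff L' x y by rewrite /ndiff (permP p).
move=> [[e1 e2 /allP e3 e4 e5] e6]; split; first split => //.
- by apply/allP => x xs; rewrite -ec; apply: e3.
- by move=> y; rewrite -ec => /e4 [i hi h]; exists i; rewrite // -es.
- by move=> i j hi hj; rewrite -es; apply: e5.
- by move=> i hi; rewrite -en; apply: e6.
Qed.

Lemma main_ind (R : realType) (d : nat) (A : seq 'rV[R]_d) :
  supersolvable A -> arrangement A -> (2 <= arr_rank A)%N ->
  exists s, Cyc A s /\ (4 <= size s)%N.
Proof.
elim => {A} [A hr|A A0 A1 h3 hp ne0 ne1 hs0 IH hr0 hpw] /arr_good ga h2.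
  by apply: base => //; apply/eqP; rewrite eqn_leq hr h2.
have gc : good (A0 ++ A1) by exact: good_perm hp ga.
have g0 : good A0 by exact: good_catl gc.
have [s0 [c0 _]] : exists s, Cyc A0 s /\ (4 <= size s)%N.
  apply: IH; first exact/arr_good.
  by rewrite hr0 -ltnS prednK // (leq_trans _ h3).
have pw : forall a b, a \in A1 -> b \in A1 -> a != b ->
    exists2 a0, a0 \in A0 & hyp a `&` hyp b `<=` hyp a0.
  move=> a b aL bL ab.
  have ia : (index a A1 < size A1)%N by rewrite index_mem.
  have ib : (index b A1 < size A1)%N by rewrite index_mem.
  have nij : index a A1 <> index b A1.
    by move=> e; move: ab; rewrite -(nth_index 0 aL) -(nth_index 0 bL) e eqxx.
  have [a0 a0L sub] := hpw _ _ ia ib nij.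
  by exists a0 => //; rewrite -{1}(nth_index 0 aL) -{1}(nth_index 0 bL).
have [a1 a1L na1] : exists2 a1, a1 \in A1 & ~~ (a1 <= matL A0)%MS.
  case: (boolP (all (fun a => a <= matL A0)%MS A1)) => h; last first.
    by have [a1 a1L na1] := allPn h; exists a1.
  have : (arr_rank A <= arr_rank A0)%N.
    apply: rank_grow => a; rewrite (perm_mem hp) mem_cat => /orP[aL|aL].
      exact: mem_sub_matL.
    exact: (allP h).
  rewrite hr0 => hle; have h1 : (0 < arr_rank A)%N by exact: leq_trans h2.
  by move: hle; rewrite -(prednK h1) ltnn.
have [s [c4 s4]] := build_step gc pw a1L na1 c0.
by exists s; split => //; apply: Cyc_perm c4; rewrite perm_sym.
Qed.


Theorem theorem1p1 (R : realType) (d : nat) (A : seq 'rV[R]_d) :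
  arrangement A -> supersolvable A -> (2 <= arr_rank A)%N ->
  exists s : seq (set 'rV[R]_d), hamiltonian_cycle A s /\ ~~ odd (size s).
Proof.
move=> ha hs h2.
have [s [c s4]] := main_ind hs ha h2.
apply: final c _.
exact: leq_trans s4.
Qed.
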